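(* Let $s<1$, $r\le0$ and $N\gg1$. The multipliers $\sigma_\pm(\xi_1,\xi_2)$ defined below satisfy, with implicit constants independent of $N$: (1) if $|\xi_1|\gg|\xi_2|$, then $|\sigma_\pm(\xi_1,\xi_2)-m_{1-s,N}(\xi_1)^2|\lesssim \frac{|\xi_2|^2}{|\xi_1|^2}+\frac{1}{|\xi_1|}$; (2) if $|\xi_1|\sim|\xi_2|$, then $|\sigma_\pm(\xi_1,\xi_2)|\lesssim 1$.
   Context: For $q\ge0$ and $N\gg1$, $m_{q,N}\in C^\infty(\mathbb{R}^2)$ is a radial function, non-increasing in $|\xi|$, with $m_{q,N}(\xi)=1$ for $|\xi|<N$ and $m_{q,N}(\xi)=(N/|\xi|)^q$ for $|\xi|>2N$. Write $\xi_{12}=\xi_1+\xi_2$, $m_{1-s,j}=m_{1-s,N}(\xi_j)$, $m_{-r,12}=m_{-r,N}(\xi_{12})$. Define \[ \sigma^Z_\pm(\xi_1,\xi_2):=\frac{|\xi_1|^2m_{1-s,1}^2-|\xi_2|^2m_{1-s,2}^2\pm|\xi_{12}|m_{-r,12}^2}{|\xi_1|^2-|\xi_2|^2\pm|\xi_{12}|},\qquad \sigma^S(\xi_1,\xi_2):=\frac{|\xi_1|^2m_{1-s,1}^2-|\xi_2|^2m_{1-s,2}^2}{|\xi_1|^2-|\xi_2|^2}, \] and $\sigma_\pm(\xi_1,\xi_2):=\sigma^Z_\pm(\xi_1,\xi_2)$ if $\big||\xi_1|^2-|\xi_2|^2\big|>2|\xi_{12}|$, and $\sigma_\pm(\xi_1,\xi_2):=\sigma^S(\xi_1,\xi_2)$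 if $\big||\xi_1|^2-|\xi_2|^2\big|\le2|\xi_{12}|$ (with $\sigma^S$ extended by continuity where $|\xi_1|=|\xi_2|$). The variables $\xi_1,\xi_2$ range over $\mathbb{R}^2$ or over the lattice $\gamma_1^{-1}\mathbb{Z}\times\gamma_2^{-1}\mathbb{Z}$. ''$A\gg B$'' means $A\ge CB$ for a sufficiently large absolute constant $C$; ''$A\sim B$'' means $C^{-1}B\le A\le CB$. *)

(* Defs.v *)
From Stdlib Require Import Reals.
From Coquelicot Require Import Coquelicot.
Open Scope R_scope.

Definition vec2 := (R * R)%type.
Definition vnorm (x : vec2) : R := sqrt (fst x ^ 2 + snd x ^ 2).
Definition vadd (x y : vec2) : vec2 := (fst x + fst y, snd x + snd y).

Definition smooth (g : R -> R) : Prop := forall (k : nat) (t : R), ex_derive_n g k t.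

(* Radial profile of m_q: m_q(xi) = g(|xi|), smooth, non-increasing in |xi|,
   = 1 for |xi| < 1 and = |xi|^{-q} for |xi| > 2. *)
Definition is_profile (q : R) (g : R -> R) : Prop :=
  smooth g /\
  (forall t, Rabs t < 1 -> g t = 1) /\
  (forall t, 2 < t -> g t = Rpower t (- q)) /\
  (forall t u, 0 <= t -> t <= u -> g u <= g t).

Definition mqN (g : R -> R) (N : R) (x : vec2) : R := g (vnorm x / N).

Definition sgn (pm : bool) : R := if pm then 1 else -1.

(* sigma^Z_{pm}; g1 is the profile for q = 1-s, g2 for q = -r *)
Definition sigmaZ (pm : bool) (g1 g2 : R -> R) (N : R) (x1 x2 : vec2) : R :=
  let a := vnorm x1 in let b := vnorm x2 in let c := vnorm (vadd x1 x2) in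
  (a ^ 2 * (mqN g1 N x1) ^ 2 - b ^ 2 * (mqN g1 N x2) ^ 2
     + sgn pm * c * (mqN g2 N (vadd x1 x2)) ^ 2)
  / (a ^ 2 - b ^ 2 + sgn pm * c).

(* u |-> u * m_{1-s,N}(sqrt u)^2, whose difference quotient between |xi2|^2 and
   |xi1|^2 is sigma^S; its derivative is the continuous extension at |xi1|=|xi2|. *)
Definition hS (g1 : R -> R) (N : R) (u : R) : R := u * (g1 (sqrt u / N)) ^ 2.

Definition sigmaS (g1 : R -> R) (N : R) (x1 x2 : vec2) : R :=
  let a := vnorm x1 in let b := vnorm x2 in
  if Req_EM_T a b then Derive (hS g1 N) (a ^ 2)
  else (a ^ 2 * (mqN g1 N x1) ^ 2 - b ^ 2 * (mqN g1 N x2) ^ 2) / (a ^ 2 - b ^ 2).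

Definition sigma_pm (pm : bool) (g1 g2 : R -> R) (N : R) (x1 x2 : vec2) : R :=
  let a := vnorm x1 in let b := vnorm x2 in
  if Rlt_dec (2 * vnorm (vadd x1 x2)) (Rabs (a ^ 2 - b ^ 2))
  then sigmaZ pm g1 g2 N x1 x2
  else sigmaS g1 N x1 x2.

(* Main.v *)
Require Import Defs.
From Stdlib Require Import Reals Lra Psatz.
From Coquelicot Require Import Coquelicot.
Open Scope R_scope.

Lemma Rpower_pos' t q : 0 < t -> 0 < Rpower t q.
Proof. intros; unfold Rpower; apply exp_pos. Qed.

Lemma prof_bounds q g : is_profile q g -> forall t, 0 <= t -> 0 < g t <= 1.
Proof.
  intros [_ [H1 [H2 H3]]] t Ht. split.
  - destruct (Rle_lt_dec t 3).
    + apply Rlt_le_trans with (g 3). rewrite H2 by lra. apply Rpower_pos'; lra.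
      apply H3; lra.
    + rewrite H2 by lra. apply Rpower_pos'; lra.
  - rewrite <- (H1 0) by (rewrite Rabs_R0; lra). apply H3; lra.
Qed.

Lemma deriv_cont g : smooth g -> forall x, continuity_pt (Derive g) x.
Proof.
  intros Hs x. apply continuity_pt_filterlim.
  exact (@ex_derive_continuous R_AbsRing R_NormedModule (Derive g) x (Hs 2%nat x)).
Qed.

Lemma gder_bound g : smooth g -> exists B, 0 <= B /\ forall t, 0 <= t <= 2 -> Rabs (Derive g t) <= B.
Proof.
  intros Hs.
  destruct (continuity_ab_maj (Derive g) 0 2) as [Mx [HM _]]. lra. intros; apply deriv_cont; auto.
  destruct (continuity_ab_min (Derive g) 0 2) as [mx [Hm _]]. lra. intros; apply deriv_cont; auto.
  exists (Rabs (Derive g Mx) + Rabs (Derive g mx)). split.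
  apply Rplus_le_le_0_compat; apply Rabs_pos.
  intros t Ht. specialize (HM t Ht). specialize (Hm t Ht).
  apply Rabs_le. split.
  - pose proof (Rabs_pos (Derive g Mx)). pose proof (Rle_abs (- Derive g mx)). rewrite Rabs_Ropp in *. lra.
  - pose proof (Rabs_pos (Derive g mx)). pose proof (Rle_abs (Derive g Mx)). lra.
Qed.

Lemma gder_large q g : is_profile q g -> forall t, 2 < t -> t * Derive g t = - q * g t.
Proof.
  intros Hp t Ht. destruct Hp as [_ [_ [H2 _]]].
  assert (E : Derive g t = Derive (fun x => Rpower x (-q)) t).
  { apply Derive_ext_loc. eapply filter_imp. 2: exact (open_gt 2 t Ht). intros; simpl. apply H2; auto. }
  rewrite E. rewrite (is_derive_unique _ _ (-q * Rpower t (-q - 1))).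
  2:{ apply is_derive_Reals. apply derivable_pt_lim_power; lra. }
  rewrite H2 by lra.
  replace (Rpower t (-q)) with (Rpower t (1 + (-q-1))) by (f_equal; ring).
  rewrite Rpower_plus, Rpower_1 by lra. ring.
Qed.

Lemma G_bound q g : is_profile q g -> exists M, 1 <= M /\
  forall t, 0 < t -> Rabs (g t ^ 2 + t * g t * Derive g t) <= M.
Proof.
  intros Hp. pose proof (prof_bounds q g Hp) as Hb.
  destruct Hp as [Hs Hr]. destruct (gder_bound g Hs) as [B [HB0 HB]].
  exists (1 + 2 * B + Rabs (1 - q)). split. pose proof (Rabs_pos (1-q)); lra.
  intros t Ht. destruct (Rle_lt_dec t 2).
  - specialize (HB t ltac:(lra)). specialize (Hb t ltac:(lra)).
    eapply Rle_trans. apply Rabs_triang. rewrite Rabs_mult, Rabs_mult.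
    rewrite (Rabs_pos_eq (g t ^ 2)) by (apply pow2_ge_0).
    rewrite (Rabs_pos_eq t), (Rabs_pos_eq (g t)) by lra.
    pose proof (Rabs_pos (1-q)). 
    assert (t * g t * Rabs (Derive g t) <= 2 * B).
    { apply Rmult_le_compat. apply Rmult_le_pos; lra. apply Rabs_pos. nra. exact HB. }
    simpl. nra.
  - rewrite Rmult_assoc, (Rmult_comm (g t)), <- Rmult_assoc, (gder_large q g (conj Hs Hr)) by lra.
    specialize (Hb t ltac:(lra)).
    replace (g t ^ 2 + - q * g t * g t) with ((1 - q) * g t ^ 2) by ring.
    rewrite Rabs_mult, (Rabs_pos_eq (g t ^2)) by apply pow2_ge_0.
    pose proof (Rabs_pos (1-q)).
    assert (g t ^ 2 <= 1) by (simpl; nra). assert (Rabs (1-q) * g t^2 <= Rabs (1-q) * 1) by (apply Rmult_le_compat_l; lra). lra.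
Qed.

Lemma is_derive_eq (f : R -> R) x l l' : is_derive f x l -> l = l' -> is_derive f x l'.
Proof. intros H ->; exact H. Qed.

Lemma hS_der_pos g N u : 0 < N -> 0 < u -> smooth g ->
  is_derive (hS g N) u (g (sqrt u / N) ^ 2 + (sqrt u / N) * g (sqrt u / N) * Derive g (sqrt u / N)).
Proof.
  intros HN Hu Hs. unfold hS.
  pose proof (sqrt_lt_R0 u Hu) as Hsq.
  assert (D1 : is_derive (fun v => sqrt v / N) u (/ N * (1 / (2 * sqrt u)))).
  { apply is_derive_ext with (fun v => / N * sqrt v). 2: apply is_derive_scal. intro t; simpl; unfold Rdiv; apply Rmult_comm.
    apply is_derive_Reals. replace (1 / (2 * sqrt u)) with (/ (2 * sqrt u)) by (field; lra).
    apply derivable_pt_lim_sqrt; lra. }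
  assert (D2 : is_derive (fun v => g (sqrt v / N)) u (/ N * (1 / (2 * sqrt u)) * Derive g (sqrt u / N))).
  { apply (is_derive_comp g (fun v => sqrt v / N)). apply Derive_correct. exact (Hs 1%nat _). exact D1. }
  assert (D3 := is_derive_pow _ 2 _ _ D2).
  assert (D4 := is_derive_mult (fun v => v) _ u _ _ (is_derive_id u) D3 Rmult_comm).
  simpl in D4. eapply is_derive_eq. exact D4.
  unfold plus, mult, one; simpl.
  assert (sqrt u * sqrt u = u) by (apply sqrt_sqrt; lra).
  set (y := sqrt u) in *. rewrite <- H. field. lra.
Qed.

Lemma hS_loc_id q g N u : is_profile q g -> 0 < N -> u < N ^ 2 -> hS g N u = u.
Proof.
  intros [_ [H1 _]] HN Hu. unfold hS. rewrite H1. ring.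
  assert (0 <= sqrt u < N).
  { split. apply sqrt_pos. destruct (Rle_lt_dec u 0).
    rewrite sqrt_neg_0 by lra. lra.
    rewrite <- (sqrt_pow2 N) by lra. apply sqrt_lt_1_alt; lra. }
  rewrite Rabs_pos_eq. apply Rmult_lt_reg_r with N; auto. unfold Rdiv. rewrite Rmult_assoc, Rinv_l by lra. lra.
  apply Rmult_le_pos. lra. left; apply Rinv_0_lt_compat; lra.
Qed.

Lemma hS_der_small q g N u : is_profile q g -> 0 < N -> u < N ^ 2 -> is_derive (hS g N) u 1.
Proof.
  intros Hp HN Hu. apply is_derive_ext_loc with (fun v => v).
  eapply filter_imp. 2: exact (open_lt (N^2) u Hu). intros; simpl. symmetry; eapply hS_loc_id; eauto.
  apply (@is_derive_id R_AbsRing).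
Qed.

Lemma hS_der q g : is_profile q g -> exists M, 1 <= M /\ forall N u, 0 < N ->
  ex_derive (hS g N) u /\ Rabs (Derive (hS g N) u) <= M.
Proof.
  intros Hp. destruct (G_bound q g Hp) as [M [HM1 HM]]. exists M. split; auto.
  intros N u HN. destruct (Rlt_le_dec u (N^2)).
  - pose proof (hS_der_small q g N u Hp HN r) as D. split. eexists; eauto.
    rewrite (is_derive_unique _ _ _ D). rewrite Rabs_R1; auto.
  - assert (0 < u) by (pose proof (pow_lt N 2 HN); lra).
    pose proof (hS_der_pos g N u HN H (proj1 Hp)) as D. split. eexists; eauto.
    rewrite (is_derive_unique _ _ _ D). apply HM.
    apply Rdiv_lt_0_compat; auto. apply sqrt_lt_R0; auto.
Qed.

Lemma hS_lip q g : is_profile q g -> exists M, 1 <= M /\ forall N, 0 < N ->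
  (forall u, Rabs (Derive (hS g N) u) <= M) /\
  (forall x y, Rabs (hS g N x - hS g N y) <= M * Rabs (x - y)).
Proof.
  intros Hp. destruct (hS_der q g Hp) as [M [HM1 HM]]. exists M. split; auto.
  intros N HN. split. intros u; apply HM; auto.
  intros x y. destruct (MVT_gen (hS g N) y x (Derive (hS g N))) as [c [_ Hc]].
  - intros z _. apply Derive_correct. apply HM; auto.
  - intros z _. apply continuity_pt_filterlim.
    exact (@ex_derive_continuous R_AbsRing R_NormedModule _ z (proj1 (HM N z HN))).
  - rewrite Hc, Rabs_mult. apply Rmult_le_compat_r. apply Rabs_pos. apply HM; auto.
Qed.

Lemma vnorm_nonneg x : 0 <= vnorm x.
Proof. apply sqrt_pos. Qed.

Lemma vnorm_sq x : vnorm x ^ 2 = fst x ^ 2 + snd x ^ 2.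
Proof. unfold vnorm. rewrite <- Rsqr_pow2. apply Rsqr_sqrt. nra. Qed.

Lemma sq_le_nonneg u v : 0 <= u -> 0 <= v -> u ^ 2 <= v ^ 2 -> u <= v.
Proof.
  intros Hu Hv H. destruct (Rle_lt_dec u v); auto. exfalso.
  assert (v * v < u * u) by (apply Rmult_le_0_lt_compat; lra). simpl in H. lra.
Qed.

Lemma vnorm_triang x y : vnorm (vadd x y) <= vnorm x + vnorm y.
Proof.
  pose proof (vnorm_nonneg x). pose proof (vnorm_nonneg y). pose proof (vnorm_nonneg (vadd x y)).
  pose proof (vnorm_sq x). pose proof (vnorm_sq y). pose proof (vnorm_sq (vadd x y)).
  destruct x as [x1 x2]; destruct y as [y1 y2]. unfold vadd in *; cbn [fst snd] in *.
  set (a := vnorm (x1,x2)) in *. set (b := vnorm (y1,y2)) in *. set (c := vnorm (x1+y1,x2+y2)) in *.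
  assert (x1*y1 + x2*y2 <= a*b).
  { destruct (Rle_lt_dec (x1*y1+x2*y2) 0). nra.
    assert ((x1*y1+x2*y2)^2 <= (a*b)^2).
    { replace ((a*b)^2) with (a^2*b^2) by ring. rewrite H2, H3.
      assert (0 <= (x1*y2 - x2*y1)^2) by apply pow2_ge_0. nra. }
    apply sq_le_nonneg; auto. lra. apply Rmult_le_pos; auto. }
  apply sq_le_nonneg; auto. lra.
  replace ((a+b)^2) with (a^2 + b^2 + 2*(a*b)) by ring. rewrite H2, H3, H4. nra.
Qed.

Lemma abs_div_le n d K : 0 < Rabs d -> Rabs n <= K * Rabs d -> Rabs (n / d) <= K.
Proof.
  intros Hd H. unfold Rdiv. rewrite Rabs_mult, Rabs_inv.
  apply Rmult_le_reg_r with (Rabs d); auto. rewrite Rmult_assoc, Rinv_l by lra. lra.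
Qed.

Lemma sgn_abs pm : Rabs (sgn pm) = 1.
Proof. destruct pm; unfold sgn. apply Rabs_R1. rewrite Rabs_left; lra. Qed.

Lemma hS_eq g N x : vnorm x ^ 2 * mqN g N x ^ 2 = hS g N (vnorm x ^ 2).
Proof. unfold hS, mqN. rewrite sqrt_pow2 by apply vnorm_nonneg. reflexivity. Qed.

Lemma mq_bounds q g N x : is_profile q g -> 0 < N -> 0 < mqN g N x ^ 2 <= 1.
Proof.
  intros Hp HN. unfold mqN. destruct (prof_bounds q g Hp (vnorm x / N)).
  apply Rdiv_le_0_compat. apply vnorm_nonneg. auto. simpl. nra.
Qed.

Lemma part2 q1 q2 g1 g2 M : is_profile q1 g1 -> is_profile q2 g2 -> 1 <= M ->
  (forall N, 0 < N ->
   (forall u, Rabs (Derive (hS g1 N) u) <= M) /\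
   (forall x y, Rabs (hS g1 N x - hS g1 N y) <= M * Rabs (x - y))) ->
  forall N pm x1 x2, 0 < N -> Rabs (sigma_pm pm g1 g2 N x1 x2) <= 2 * M + 1.
Proof.
  intros Hp1 Hp2 HM1 HM N pm x1 x2 HN. destruct (HM N HN) as [Hd Hl].
  pose proof (vnorm_nonneg x1). pose proof (vnorm_nonneg x2). pose proof (vnorm_nonneg (vadd x1 x2)).
  pose proof (mq_bounds q2 g2 N (vadd x1 x2) Hp2 HN).
  unfold sigma_pm, sigmaZ, sigmaS. rewrite !hS_eq.
  destruct (Rlt_dec _ _) as [Hz | Hz].
  - set (D := vnorm x1 ^ 2 - vnorm x2 ^ 2) in *. set (c := vnorm (vadd x1 x2)) in *.
    set (m := mqN g2 N (vadd x1 x2) ^ 2) in *.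
    specialize (Hl (vnorm x1 ^ 2) (vnorm x2 ^ 2)). fold D in Hl.
    assert (Hd' : Rabs D - c <= Rabs (D + sgn pm * c)).
    { assert (Rabs D <= Rabs (D + sgn pm * c) + c); [|lra].
      replace D with ((D + sgn pm * c) + - (sgn pm * c)) at 1 by ring.
      eapply Rle_trans. apply Rabs_triang. rewrite Rabs_Ropp, Rabs_mult, sgn_abs, (Rabs_pos_eq c) by lra. lra. }
    assert (Hn : Rabs (hS g1 N (vnorm x1 ^ 2) - hS g1 N (vnorm x2 ^ 2) + sgn pm * c * m) <= M * Rabs D + c).
    { eapply Rle_trans. apply Rabs_triang. rewrite !Rabs_mult, sgn_abs, (Rabs_pos_eq c), (Rabs_pos_eq m) by lra. nra. }
    apply abs_div_le. lra. nra.
  - destruct (Req_EM_T _ _) as [E | E].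
    + pose proof (Hd (vnorm x1 ^ 2)). lra.
    + specialize (Hl (vnorm x1 ^ 2) (vnorm x2 ^ 2)).
      assert (0 < Rabs (vnorm x1 ^ 2 - vnorm x2 ^ 2)).
      { apply Rabs_pos_lt. intro E2. apply E. assert ((vnorm x1 - vnorm x2) * (vnorm x1 + vnorm x2) = 0) by (simpl in E2; nra).
        apply Rmult_integral in H3. destruct H3; nra. }
      apply abs_div_le. auto. nra.
Qed.

Lemma part1 q1 q2 g1 g2 M : is_profile q1 g1 -> is_profile q2 g2 -> 1 <= M ->
  (forall N, 0 < N ->
   (forall u, Rabs (Derive (hS g1 N) u) <= M) /\
   (forall x y, Rabs (hS g1 N x - hS g1 N y) <= M * Rabs (x - y))) ->
  forall N pm x1 x2, 0 < N -> 2 * vnorm x2 <= vnorm x1 ->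
  Rabs (sigma_pm pm g1 g2 N x1 x2 - (mqN g1 N x1) ^ 2)
         <= (4 * M + 10) * (vnorm x2 ^ 2 / vnorm x1 ^ 2 + / vnorm x1).
Proof.
  intros Hp1 Hp2 HM1 HM N pm x1 x2 HN Hab. destruct (HM N HN) as [Hd Hl].
  pose proof (vnorm_nonneg x1) as Ha0. pose proof (vnorm_nonneg x2) as Hb0.
  pose proof (vnorm_nonneg (vadd x1 x2)) as Hc0. pose proof (vnorm_triang x1 x2) as Htr.
  pose proof (mq_bounds q2 g2 N (vadd x1 x2) Hp2 HN) as Hm3.
  pose proof (mq_bounds q1 g1 N x1 Hp1 HN) as Hm1.
  pose proof (mq_bounds q1 g1 N x2 Hp1 HN) as Hm2.
  destruct (Req_dec (vnorm x1) 0) as [Ha | Ha].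
  - assert (Hb : vnorm x2 = 0) by lra.
    assert (P1 : mqN g1 N x1 = 1).
    { unfold mqN. rewrite Ha. unfold Rdiv; rewrite Rmult_0_l. apply (proj1 (proj2 Hp1)). rewrite Rabs_R0; lra. }
    unfold sigma_pm, sigmaS. rewrite P1, Ha, Hb.
    destruct (Rlt_dec _ _) as [Hz | Hz].
    { exfalso. replace (0 ^ 2 - 0 ^ 2) with 0 in Hz by ring. rewrite Rabs_R0 in Hz. lra. }
    destruct (Req_EM_T 0 0) as [_ | E]; [| lra].
    replace (0 ^ 2) with 0 by ring.
    rewrite (is_derive_unique _ _ _ (hS_der_small q1 g1 N 0 Hp1 HN ltac:(pose proof (pow_lt N 2 HN); lra))).
    unfold Rdiv. rewrite Rinv_0. replace (1 - 1 ^ 2) with 0 by ring. rewrite Rabs_R0. lra.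
  - assert (Ha1 : 0 < vnorm x1) by lra.
    unfold sigma_pm, sigmaZ, sigmaS. rewrite !hS_eq.
    set (a := vnorm x1) in *. set (b := vnorm x2) in *. set (c := vnorm (vadd x1 x2)) in *.
    set (u := / a).
    assert (Hu : a * u = 1) by (unfold u; field; lra).
    assert (Hu0 : 0 < u) by (unfold u; apply Rinv_0_lt_compat; lra).
    assert (Hba : b ^ 2 / a ^ 2 = b ^ 2 * u ^ 2) by (unfold u; field; lra).
    rewrite Hba.
    assert (HD : 3 * a ^ 2 / 4 <= a ^ 2 - b ^ 2).
    { assert (0 <= (a - 2*b)*(a+2*b)) by (apply Rmult_le_pos; lra). simpl. lra. }
    pose proof (pow2_ge_0 a) as Ha2.
    destruct (Rlt_dec _ _) as [Hz | Hz].
    + set (D := a ^ 2 - b ^ 2) in *. rewrite Rabs_pos_eq in Hz by lra.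
      set (P := mqN g1 N x1 ^ 2) in *. set (m2 := mqN g1 N x2 ^ 2) in *.
      set (m3 := mqN g2 N (vadd x1 x2) ^ 2) in *.
      assert (Hd' : D - c <= Rabs (D + sgn pm * c)).
      { assert (D <= Rabs (D + sgn pm * c) + c); [|lra].
        rewrite <- (Rabs_pos_eq D) at 1 by lra.
        replace D with ((D + sgn pm * c) + - (sgn pm * c)) at 1 by ring.
        eapply Rle_trans. apply Rabs_triang. rewrite Rabs_Ropp, Rabs_mult, sgn_abs, (Rabs_pos_eq c) by lra. lra. }
      assert (Hdn : D + sgn pm * c <> 0) by (intro E; rewrite E, Rabs_R0 in Hd'; lra).
      replace (hS g1 N (a ^ 2)) with (a ^ 2 * P) by (exact (hS_eq g1 N x1)).
      replace (hS g1 N (b ^ 2)) with (b ^ 2 * m2) by (exact (hS_eq g1 N x2)).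
      replace ((a ^ 2 * P - b ^ 2 * m2 + sgn pm * c * m3) / (D + sgn pm * c) - P)
        with ((b ^ 2 * (P - m2) + sgn pm * c * (m3 - P)) / (D + sgn pm * c))
        by (unfold D; field; exact Hdn).
      apply abs_div_le. lra.
      assert (Hn : Rabs (b ^ 2 * (P - m2) + sgn pm * c * (m3 - P)) <= b ^ 2 + c).
      { eapply Rle_trans. apply Rabs_triang. rewrite !Rabs_mult, sgn_abs, (Rabs_pos_eq c) by lra.
        rewrite Rabs_pos_eq by apply pow2_ge_0.
        assert (Rabs (P - m2) <= 1) by (apply Rabs_le; lra).
        assert (Rabs (m3 - P) <= 1) by (apply Rabs_le; lra).
        pose proof (pow2_ge_0 b). pose proof (Rabs_pos (P - m2)). pose proof (Rabs_pos (m3-P)). nra. }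
      set (K := b ^ 2 * u ^ 2 + u) in *.
      assert (HK : K * (3 * a ^ 2 / 8) = 3 / 8 * (b ^ 2 + a)).
      { unfold K. replace ((b ^ 2 * u ^ 2 + u) * (3 * a ^ 2 / 8)) with (3/8*(b^2*(a*u)^2 + (a*u)*a)) by (field; lra).
        rewrite Hu. ring. }
      assert (HK0 : 0 <= K) by (unfold K; pose proof (pow2_ge_0 b); pose proof (pow2_ge_0 u); nra).
      assert (K * (3 * a ^ 2 / 8) <= K * Rabs (D + sgn pm * c)).
      { apply Rmult_le_compat_l; auto. lra. }
      assert ((4 * M + 10) * K * Rabs (D + sgn pm * c) >= 10 * (K * Rabs (D + sgn pm * c))).
      { rewrite Rmult_assoc. apply Rle_ge, Rmult_le_compat_r. apply Rmult_le_pos; auto; apply Rabs_pos. lra. }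
      pose proof (pow2_ge_0 b). lra.
    + assert (HD0 : a ^ 2 - b ^ 2 <= 2 * c) by (rewrite Rabs_pos_eq in Hz; lra).
      assert (Ha4 : a <= 4) by (simpl in *; nra).
      pose proof (pow_lt a 2 Ha1) as Ha2p.
      destruct (Req_EM_T a b) as [E | E]. lra.
      assert (HS : Rabs ((hS g1 N (a ^ 2) - hS g1 N (b ^ 2)) / (a ^ 2 - b ^ 2)) <= M).
      { apply abs_div_le. rewrite Rabs_pos_eq; lra. apply Hl. }
      assert (Rabs ((hS g1 N (a ^ 2) - hS g1 N (b ^ 2)) / (a ^ 2 - b ^ 2) - mqN g1 N x1 ^ 2) <= M + 1).
      { eapply Rle_trans. unfold Rminus at 1. apply Rabs_triang. rewrite Rabs_Ropp, (Rabs_pos_eq (mqN g1 N x1 ^ 2)) by lra. lra. }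
      assert (Hu4 : / 4 <= u) by (unfold u; apply Rinv_le_contravar; lra).
      assert (0 <= b ^ 2 * u ^ 2) by (apply Rmult_le_pos; apply pow2_ge_0).
      assert ((4 * M + 10) * / 4 <= (4 * M + 10) * (b ^ 2 * u ^ 2 + u)) by (apply Rmult_le_compat_l; lra).
      lra.
Qed.

Theorem lemma3p1 (s r : R) (g1 g2 : R -> R) :
  s < 1 -> r <= 0 -> is_profile (1 - s) g1 -> is_profile (- r) g2 ->
  (exists C0 N0 C : R, 0 < C0 /\ 0 < C /\
     forall (N : R) (pm : bool) (x1 x2 : vec2),
       N0 <= N -> C0 * vnorm x2 <= vnorm x1 ->
       Rabs (sigma_pm pm g1 g2 N x1 x2 - (mqN g1 N x1) ^ 2)
         <= C * (vnorm x2 ^ 2 / vnorm x1 ^ 2 + / vnorm x1))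
  /\
  (forall K : R, 1 <= K ->
     exists N0 C : R,
       forall (N : R) (pm : bool) (x1 x2 : vec2),
         N0 <= N -> vnorm x1 <= K * vnorm x2 -> vnorm x2 <= K * vnorm x1 ->
         Rabs (sigma_pm pm g1 g2 N x1 x2) <= C).
Proof.
  intros Hs Hr Hp1 Hp2. destruct (hS_lip _ _ Hp1) as [M [HM1 HM]]. split.
  - exists 2, 1, (4 * M + 10). split. lra. split. lra.
    intros N pm x1 x2 HN H. apply (part1 (1 - s) (- r)); auto; lra.
  - intros K _. exists 1, (2 * M + 1). intros N pm x1 x2 HN _ _.
    apply (part2 (1 - s) (- r)); auto; lra.
Qed.
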